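(* Let $\mathbf A\in\mathcal S_{++}^n$, and let $(\mathbf W(t),\mathbf M(t))$ be a solution of the ODE $(\ast)$ with $\tau=\tfrac12$ and initial condition $(\mathbf W_0,\mathbf M_0)\in\mathcal D$. Then, for all $t\ge 0$, $$L(\mathbf W(t),\mathbf M(t))=L(\mathbf W_0,\mathbf M_0)\,e^{-8t}.$$
   Context: Let $n>k\ge1$ be integers. $\mathcal S_{++}^m$ denotes the $m\times m$ symmetric positive definite matrices; $\mathbf A\in\mathcal S_{++}^n$, and $\mathcal D:=\mathbb R^{k\times n}\times\mathcal S_{++}^k$. For a parameter $\tau>0$, consider the ODE $(\ast)$ on $\mathcal D$: $$\tfrac12\tfrac{d\mathbf W}{dt}=\mathbf M^{-1}\mathbf W\mathbf A-\mathbf W,\qquad \tau\tfrac{d\mathbf M}{dt}=\mathbf M^{-1}\mathbf W\mathbf A\mathbf W^\top\mathbf M^{-1}-\mathbf M.$$ A solution is a continuously differentiable map $[0,\infty)\to\mathcal D$ satisfying $(\ast)$. Define $L(\mathbf W,\mathbf M):=\|\mathbf W\mathbf W^\top-\mathbf M^2\|^2=\operatorname{tr}[(\mathbf W\mathbf W^\top-\mathbf M^2)^2]$, where $\|\cdot\|$ is the Frobenius norm. *)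

(* Defs.v *)
From HB Require Import structures.
From mathcomp Require Import all_boot all_order all_algebra.
From mathcomp Require Import all_classical all_reals all_analysis.
Set Implicit Arguments. Unset Strict Implicit. Unset Printing Implicit Defensive.
Import Order.TTheory GRing.Theory Num.Theory.
Import numFieldNormedType.Exports.
Local Open Scope classical_set_scope.
Local Open Scope ring_scope.

Definition posdef (R : realType) (m : nat) (M : 'M[R]_m) : Prop :=
  M^T = M /\ forall x : 'cV[R]_m, x != 0 -> 0 < (x^T *m M *m x) 0 0.

(* derivative of f at t relative to the domain [0, +oo) (one-sided at t = 0):
   lim_{h -> 0, h <> 0, t + h >= 0} h^-1 (f (t+h) - f t) = d *)
Definition has_deriv_nonneg (R : realType) (V : normedModType R)
  (f : R -> V) (t : R) (d : V) : Prop :=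
  (fun h : R => h^-1 *: (f (t + h) - f t)) @ within (fun h : R => 0 <= t + h) 0^'
    --> d.

Definition C1_nonneg (R : realType) (V : normedModType R) (f f' : R -> V) : Prop :=
  (forall t, 0 <= t -> has_deriv_nonneg f t (f' t)) /\
  {within `[0, +oo[, continuous f'}.

(* (W, M) : [0,oo) -> D = R^{k x n} x S_++^k is a solution of the ODE ( * )
   with parameter tau and data A *)
Definition is_solution (R : realType) (k n : nat) (A : 'M[R]_n) (tau : R)
  (W : R -> 'M[R]_(k, n)) (M : R -> 'M[R]_k) : Prop :=
  exists (W' : R -> 'M[R]_(k, n)) (M' : R -> 'M[R]_k),
    C1_nonneg W W' /\ C1_nonneg M M' /\
    (forall t, 0 <= t -> posdef (M t)) /\
    (forall t, 0 <= t ->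
       (1 / 2) *: W' t = invmx (M t) *m W t *m A - W t /\
       tau *: M' t = invmx (M t) *m W t *m A *m (W t)^T *m invmx (M t) - M t).

(* L(W, M) = || W W^T - M^2 ||_F^2 = tr[(W W^T - M^2)^2] *)
Definition Lobj (R : realType) (k n : nat) (W : 'M[R]_(k, n)) (M : 'M[R]_k) : R :=
  let D := W *m W^T - M *m M in \tr (D *m D).

(* Main.v *)
Require Import Defs.
From HB Require Import structures.
From mathcomp Require Import all_boot all_order all_algebra.
From mathcomp Require Import all_classical all_reals all_analysis.
From mathcomp Require Import ring lra.
Import Order.TTheory GRing.Theory Num.Theory.
Import numFieldNormedType.Exports.
Local Open Scope classical_set_scope.
Local Open Scope ring_scope.

Lemma hd_entry (R : realType) m n (f : R -> 'M[R]_(m, n)) t d i j :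
  has_deriv_nonneg f t d -> has_deriv_nonneg (fun s => f s i j) t (d i j).
Proof.
move=> H; rewrite /has_deriv_nonneg.
have -> : (fun h : R => h^-1 *: (f (t + h) i j - f t i j)) =
   (fun M : 'M[R]_(m, n) => M i j) \o (fun h : R => h^-1 *: (f (t + h) - f t)).
  by apply/funext => h /=; rewrite !mxE.
apply: cvg_comp; [exact: H | exact: coord_continuous].

Qed.

Lemma hd_derive (R : realType) (e : R -> R) t d :
  0 < t -> has_deriv_nonneg e t d -> is_derive t 1 e d.
Proof.
move=> t0 H.
have H2 : (fun h : R => h^-1 *: ((e \o shift t) (h *: 1) - e t)) @ 0^' --> d.
  have -> : (fun h : R => h^-1 *: ((e \o shift t) (h *: 1) - e t)) =
            (fun h => h^-1 *: (e (t + h) - e t)).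
    apply/funext => h /=; rewrite /shift /= (_ : h%:A = h) ?(addrC h) //; exact: (mulr1 h).
  move=> A hA; have := H A hA.
  have P : \forall h \near 0^', 0 <= t + h.
    apply: (@cvg_within _ (nbhs (0:R))).
    have : (fun h : R => t + h) @ 0 --> t + 0.
      by apply: cvgD; [exact: cvg_cst | exact: cvg_id].
    rewrite addr0 => /cvgr_gt /(_ _ t0).
    by apply: filterS => x /ltW.
  move=> /= HA; apply: (filter_app _ _ P); exact: HA.
split; first by apply/cvg_ex; exists d.
exact: cvg_lim.
Unshelve. all: by end_near. Qed.

Lemma hd_cont0 (R : realType) (e : R -> R) d :
  has_deriv_nonneg e 0 d -> e x @[x --> 0^'+] --> e 0.
Proof.
move=> H.
have G : (fun h : R => h^-1 *: (e (0 + h) - e 0)) @ 0^'+ --> d.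
  move=> A hA; have /= HA := H A hA.
  have HA' : nbhs (0:R) (fun h : R => h != 0 -> 0 <= 0 + h -> A (h^-1 *: (e (0 + h) - e 0))) := HA.
  change (nbhs (0:R) (fun h : R => 0 < h -> A (h^-1 *: (e (0 + h) - e 0)))).
  apply: filterS HA' => h Hh hpos; apply: Hh.
    by rewrite gt_eqF.
  by rewrite add0r ltW.
have Hid : (fun h : R => h) @ 0^'+ --> (0:R).
  move=> A hA; change (nbhs (0:R) (fun h : R => 0 < h -> A h)).
  by apply: filterS hA => x Ax _.
have K : (fun h : R => e 0 + h * (h^-1 *: (e (0 + h) - e 0))) @ 0^'+ --> e 0 + 0 * d.
  by apply: cvgD; [exact: cvg_cst | exact: cvgM].
rewrite mul0r addr0 in K.
apply: (cvg_trans _ K); apply: near_eq_cvg; near=> h.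
have hn : h != 0 by rewrite gt_eqF //; near: h; exact: nbhs_right_gt.
by rewrite add0r /GRing.scale /= mulrA mulfV // mul1r addrC subrK.
Unshelve. all: by end_near. Qed.

Lemma const0 (R : realType) (g : R -> R) :
  (forall t : R, 0 < t -> is_derive t 1 g 0) -> g x @[x --> 0^'+] --> g 0 ->
  forall t : R, 0 <= t -> g t = g 0.
Proof.
move=> Hd Hc t; rewrite le_eqVlt => /orP[/eqP <- // | t0].
have := @MVT R g (fun _ => 0) 0 t t0.
case.
- by move=> x; rewrite in_itv /= => /andP[x0 _]; exact: Hd.
- apply: derivable_oo_LRcontinuous_within; split => //.
  + by move=> x; rewrite in_itv /= => /andP[x0 _]; case: (Hd x x0).
  + apply: cvg_at_left_filter.
    have : derivable g t 1 by case: (Hd t t0).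
    by move/derivable1_diffP/differentiable_continuous.
- by move=> c _; rewrite mul0r => /eqP; rewrite subr_eq0 => /eqP.
Qed.

Arguments hd_derive {R e t d}.
Arguments hd_entry {R m n f t d}.
Arguments hd_cont0 {R e d}.

Lemma posdef_unit (R : realType) m (M : 'M[R]_m) : posdef M -> M \in unitmx.
Proof.
case=> _ H; rewrite unitmxE unitfE; apply/negP => /det0P[v v0 vM].
have := H v^T; rewrite trmx_eq0 v0 trmxK => /(_ isT).
by rewrite vM mul0mx mxE ltxx.
Qed.

Lemma deriv_sum_prod (R : realType) (N : nat) (a b : 'I_N -> R -> R)
  (da db : 'I_N -> R) (t : R) :
  (forall l, is_derive t 1 (a l) (da l)) -> (forall l, is_derive t 1 (b l) (db l)) ->
  is_derive t 1 (fun s => \sum_(l < N) a l s * b l s)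
    (\sum_(l < N) (da l * b l t + a l t * db l)).
Proof.
move=> Ha Hb.
have H : forall l, is_derive t 1 (a l * b l) (da l * b l t + a l t * db l).
  move=> l; have := is_deriveM (Ha l) (Hb l) => HH.
  eapply is_derive_eq; first exact HH.
  by rewrite /GRing.scale /= addrC mulrC [da l * _]mulrC.
have := is_derive_sum H.
by rewrite fct_sumE.
Qed.

Lemma g_deriv (R : realType) (S : R -> R) dS (t : R) :
  is_derive t 1 S dS -> dS = -4 * S t ->
  is_derive t 1 (fun s => expR (4 * s) * S s) 0.
Proof.
move=> HS hd.
have E1 : is_derive t 1 (fun s : R => 4 * s) 4.
  have HH := is_deriveZ 4 (is_derive_id t 1).
  eapply is_derive_eq; first exact HH.
  by rewrite /GRing.scale /= mulr1.
have E : is_derive t 1 (fun s : R => expR (4 * s)) (expR (4 * t) * 4).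
  have HH := is_derive1_comp (f := expR) (g := fun s : R => 4 * s) (is_derive_expR _) E1.
  exact HH.
have := is_deriveM E HS.
rewrite (_ : ((fun s : R => expR (4 * s)) * S) = (fun s => expR (4 * s) * S s)) //.
move=> HH; eapply is_derive_eq; first exact HH.
rewrite /GRing.scale /= hd; ring.
Qed.

Lemma cvg_bigsum (R : realType) (T : Type) (F : set_system T) (FF : Filter F)
  (N : nat) (f : 'I_N -> T -> R) (l : 'I_N -> R) :
  (forall i, f i x @[x --> F] --> l i) ->
  (fun x => \sum_(i < N) f i x) @ F --> \sum_(i < N) l i.
Proof.
move=> H; rewrite -fct_sumE.
apply: (big_ind2 (fun u v => u x @[x --> F] --> v)).
- exact: cvg_cst.
- by move=> u1 v1 u2 v2 h1 h2; exact: cvgD.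
- by move=> i _; exact: H.
Qed.

Lemma ode_ident (R : realType) k n (A : 'M[R]_n) (W W' : 'M[R]_(k, n))
  (M M' : 'M[R]_k) :
  A^T = A -> M^T = M -> M \in unitmx ->
  (1 / 2) *: W' = invmx M *m W *m A - W ->
  (1 / 2) *: M' = invmx M *m W *m A *m W^T *m invmx M - M ->
  W' *m W^T + W *m W'^T - (M' *m M + M *m M') = (-4) *: (W *m W^T - M *m M).
Proof.
move=> hA hM hU e1 e2.
have h2 : (2 : R) * (1 / 2) = 1 by field.
have eW : W' = 2 *: (invmx M *m W *m A - W) by rewrite -e1 scalerA h2 scale1r.
have eM : M' = 2 *: (invmx M *m W *m A *m W^T *m invmx M - M)
  by rewrite -e2 scalerA h2 scale1r.
have hMi : (invmx M)^T = invmx M by rewrite trmx_inv hM.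
rewrite eW eM.
set Mi := invmx M in hMi *.
have q1 : (2 *: (Mi *m W *m A - W)) *m W^T = 2 *: (Mi *m W *m A *m W^T - W *m W^T).
  by rewrite -scalemxAl mulmxBl.
have q2 : W *m (2 *: (Mi *m W *m A - W))^T = 2 *: (W *m A *m W^T *m Mi - W *m W^T).
  by rewrite linearZ /= linearB /= !trmx_mul hA hMi -scalemxAr mulmxBr !mulmxA.
have q3 : (2 *: (Mi *m W *m A *m W^T *m Mi - M)) *m M =
          2 *: (Mi *m W *m A *m W^T - M *m M).
  by rewrite -scalemxAl mulmxBl -(mulmxA (Mi *m W *m A *m W^T) Mi M) /Mi mulVmx // mulmx1.
have q4 : M *m (2 *: (Mi *m W *m A *m W^T *m Mi - M)) =
          2 *: (W *m A *m W^T *m Mi - M *m M).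
  by rewrite -scalemxAr mulmxBr !mulmxA /Mi mulmxV // mul1mx.
rewrite q1 q2 q3 q4.
move: (Mi *m W *m A *m W^T) (W *m A *m W^T *m Mi) (W *m W^T) (M *m M) => P Q X Y.
apply/matrixP => a b; rewrite !mxE; ring.
Qed.

Arguments ode_ident {R k n A W W' M M'}.
Arguments posdef_unit {R m M}.

Theorem lemma2 (R : realType) (n k : nat) (hk : (1 <= k)%N) (hkn : (k < n)%N)
  (A : 'M[R]_n) (hA : posdef A)
  (W : R -> 'M[R]_(k, n)) (M : R -> 'M[R]_k)
  (hsol : is_solution A (1 / 2) W M) :
  forall t : R, 0 <= t ->
    Lobj (W t) (M t) = Lobj (W 0) (M 0) * expR (- 8 * t).
Proof.
case: hsol => W' [M' [[hW _] [[hM _] [hpd hode]]]].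
pose D s := W s *m (W s)^T - M s *m M s.
have keyD : forall t, 0 <= t -> D t = expR (-4 * t) *: D 0.
  move=> t ht; apply/matrixP => i j.
  pose S s := \sum_(l < n) W s i l * W s j l - \sum_(l < k) M s i l * M s l j.
  have DS : forall s, D s i j = S s.
    by move=> s; rewrite /D /S !mxE; congr (_ - _); apply: eq_bigr => l _; rewrite mxE.
  pose g s := expR (4 * s) * S s.
  have gc : g t = g 0.
    apply: const0 => // [s s0|].
    - apply: (@g_deriv _ S
        ((\sum_(l < n) (W' s i l * W s j l + W s i l * W' s j l)) -
         (\sum_(l < k) (M' s i l * M s l j + M s i l * M' s l j)))).
        have H1 := @deriv_sum_prod R n (fun l s => W s i l) (fun l s => W s j l)
          (fun l => W' s i l) (fun l => W' s j l) s
          (fun l => hd_derive s0 (hd_entry i l (hW s (ltW s0))))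
          (fun l => hd_derive s0 (hd_entry j l (hW s (ltW s0)))).
        have H2 := @deriv_sum_prod R k (fun l s => M s i l) (fun l s => M s l j)
          (fun l => M' s i l) (fun l => M' s l j) s
          (fun l => hd_derive s0 (hd_entry i l (hM s (ltW s0))))
          (fun l => hd_derive s0 (hd_entry l j (hM s (ltW s0)))).
        have HH := is_deriveB H1 H2.
        exact HH.
      have [e1 e2] := hode s (ltW s0).
      have E := ode_ident (proj1 hA) (proj1 (hpd s (ltW s0)))
                 (posdef_unit (hpd s (ltW s0))) e1 e2.
      have := congr1 (fun X : 'M[R]_k => X i j) E.
      rewrite -DS /D !mxE /= => <-; rewrite !big_split /=.
      by congr (_ + _ - (_ + _)); apply: eq_bigr => l _; rewrite mxE.
    - have cW : forall a b, (fun s => W s a b) x @[x --> 0^'+] --> W 0 a b.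
        by move=> a b; exact: (hd_cont0 (hd_entry a b (hW 0 (lexx 0)))).
      have cM : forall a b, (fun s => M s a b) x @[x --> 0^'+] --> M 0 a b.
        by move=> a b; exact: (hd_cont0 (hd_entry a b (hM 0 (lexx 0)))).
      have cS : S x @[x --> 0^'+] --> S 0.
        apply: cvgB; apply: cvg_bigsum => l; apply: cvgM; by [apply: cW | apply: cM].
      have cE : expR (4 * x) @[x --> (0:R)^'+] --> expR (4 * 0).
        apply: cvg_at_right_filter.
        apply: continuous_comp; last exact: continuous_expR.
        apply: cvgMr; exact: cvg_id.
      exact: cvgM.
  have -> : (expR (-4 * t) *: D 0) i j = expR (-4 * t) * D 0 i j by rewrite mxE.
  rewrite !DS.
  move: gc; rewrite /g mulr0 expR0 mul1r => gc.
  have e : expR (-4 * t) * expR (4 * t) = 1.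
    by rewrite -expRD (_ : -4 * t + 4 * t = 0) ?expR0 //; ring.
  by rewrite -gc mulrA e mul1r.
move=> t ht.
rewrite /Lobj -/(D t) -/(D 0) keyD // -scalemxAl -scalemxAr scalerA mxtraceZ.
rewrite mulrC; congr (_ * _); rewrite -expRD; congr expR; ring.
Qed.
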